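(* (Compatibility is transitive.) For all matches $(p,\sigma)$, $(q,\rho)$, $(r,\theta)$: if $p,\sigma\sqsubseteq q,\rho$ and $q,\rho\sqsubseteq r,\theta$, then $p,\sigma\sqsubseteq r,\theta$.
   Context: CPC patterns over a countable set of names: $p ::= \lambda x \mid x \mid \ulcorner x\urcorner \mid p\bullet p$ (binding name, variable name, protected name, compound). ${\sf bn}(p)$, ${\sf vn}(p)$, ${\sf pn}(p)$ are the sets of binding, variable and protected names of $p$; ${\sf fn}(p)={\sf vn}(p)\cup{\sf pn}(p)$. Patterns are well formed (binding names pairwise distinct and distinct from free names). Communicable patterns contain no protected or binding names. A substitution is a finite partial function from names to communicable patterns; $\hat\sigma$ acts on patterns by $\hat\sigma x=x$, $\hat\sigma\ulcorner x\urcorner=\ulcorner x\urcorner$, $\hat\sigma(\lambda x)=\sigma(x)$ if $x\in{\sf dom}(\sigma)$ else $\lambda x$, $\hat\sigma(p\bullet q)=\hat\sigma p\bullet\hat\sigma q$. A match $(p,\sigma)$ is a pattern $p$ and substitution $\sigma$ with ${\sf dom}(\sigma)={\sf bn}(p)$. Compatibility $p,\sigma\sqsubseteq q,\rho$ is the least relation between matches with: $p,\sigma\sqsubseteq\lambda y,\{\hat\sigma p/y\}$ if ${\sf fn}(p)=\emptyset$; $n,\{\}\sqsubseteq n,\{\}$; $\ulcorner n\urcorner,\{\}\sqsubseteq\ulcorner n\urcorner,\{\}$; $\ulcorner n\urcorner,\{\}\sqsubseteq n,\{\}$; $p_1\bullet p_2,\sigma_1\cup\sigma_2\sqsubseteq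 q_1\bullet q_2,\rho_1\cup\rho_2$ if $p_i,\sigma_i\sqsubseteq q_i,\rho_i$ for $i=1,2$. *)

(* Defs.v *)
From Stdlib Require Import List Arith.
Import ListNotations.

Definition name := nat.

(* p ::= \lambda x | x | \ulcorner x \urcorner | p \bullet p *)
Inductive pattern : Type :=
| PBind : name -> pattern
| PVar  : name -> pattern
| PProt : name -> pattern
| PComp : pattern -> pattern -> pattern.

Fixpoint bn (p : pattern) : list name :=
  match p with
  | PBind x => [x] | PVar _ => [] | PProt _ => []
  | PComp p q => bn p ++ bn q end.

Fixpoint vn (p : pattern) : list name :=
  match p with
  | PVar x => [x] | PBind _ => [] | PProt _ => []
  | PComp p q => vn p ++ vn q end.

Fixpoint pn (p : pattern) : list name :=
  match p with
  | PProt x => [x] | PBind _ => [] | PVar _ => []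
  | PComp p q => pn p ++ pn q end.

Definition fn (p : pattern) : list name := vn p ++ pn p.

Definition well_formed (p : pattern) : Prop :=
  NoDup (bn p) /\ (forall x, In x (bn p) -> ~ In x (fn p)).

Definition communicable (p : pattern) : Prop := bn p = [] /\ pn p = [].

(* Substitutions: partial functions from names to (communicable) patterns.
   Finiteness of the domain is enforced for matches by dom(sigma) = bn(p). *)
Definition subst := name -> option pattern.

Definition dom (s : subst) (x : name) : Prop := s x <> None.

Definition empty_subst : subst := fun _ => None.

Definition single_subst (y : name) (v : pattern) : subst :=
  fun x => if Nat.eqb x y then Some v else None.

Definition union_subst (s1 s2 : subst) : subst :=
  fun x => match s1 x with Some v => Some v | None => s2 x end.

Definition subst_eq (s1 s2 : subst) : Prop := forall x, s1 x = s2 x.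

Fixpoint apply_subst (s : subst) (p : pattern) : pattern :=
  match p with
  | PVar x => PVar x
  | PProt x => PProt x
  | PBind x => match s x with Some v => v | None => PBind x end
  | PComp p q => PComp (apply_subst s p) (apply_subst s q)
  end.

Definition is_match (p : pattern) (s : subst) : Prop :=
  well_formed p /\
  (forall x, dom s x <-> In x (bn p)) /\
  (forall x v, s x = Some v -> communicable v).

(* Compatibility p,sigma ⊑ q,rho : the least relation between matches closed
   under the five rules.  Substitutions are compared extensionally. *)
Inductive compat : pattern -> subst -> pattern -> subst -> Prop :=
| compat_bind : forall p s y r,
    is_match p s -> fn p = [] ->
    subst_eq r (single_subst y (apply_subst s p)) ->
    compat p s (PBind y) r
| compat_var : forall n s r,
    subst_eq s empty_subst -> subst_eq r empty_subst ->
    compat (PVar n) s (PVar n) r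
| compat_prot : forall n s r,
    subst_eq s empty_subst -> subst_eq r empty_subst ->
    compat (PProt n) s (PProt n) r
| compat_prot_var : forall n s r,
    subst_eq s empty_subst -> subst_eq r empty_subst ->
    compat (PProt n) s (PVar n) r
| compat_comp : forall p1 p2 q1 q2 s1 s2 r1 r2 s r,
    compat p1 s1 q1 r1 -> compat p2 s2 q2 r2 ->
    subst_eq s (union_subst s1 s2) -> subst_eq r (union_subst r1 r2) ->
    is_match (PComp p1 p2) s -> is_match (PComp q1 q2) r ->
    compat (PComp p1 p2) s (PComp q1 q2) r.

(* Main.v *)
Require Import Defs.
From Stdlib Require Import List Arith.
Import ListNotations.

Lemma nodup_disj (l1 l2 : list name) x :
  NoDup (l1 ++ l2) -> In x l1 -> In x l2 -> False.
Proof.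
  induction l1 as [|a l1 IH]; simpl; intros H H1 H2; [easy|].
  inversion H as [|a0 l0 Hn Hd]; subst. destruct H1 as [<-|H1].
  - apply Hn, in_or_app; auto.
  - eauto.
Qed.

Lemma apply_ext_on s s' p :
  (forall x, In x (bn p) -> s x = s' x) -> apply_subst s p = apply_subst s' p.
Proof.
  induction p; simpl; intros H; auto.
  - rewrite H; auto.
  - rewrite IHp1, IHp2; auto; intros; apply H, in_or_app; auto.
Qed.

Lemma is_match_ext p s s' : is_match p s -> subst_eq s s' -> is_match p s'.
Proof.
  intros [W [D C]] E. split; [exact W|split].
  - intros x. unfold dom in *. rewrite <- E. apply D.
  - intros x v Hx. rewrite <- E in Hx. eauto.
Qed.

Lemma fn_comp_nil a b : fn (PComp a b) = [] -> fn a = [] /\ fn b = [].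
Proof.
  unfold fn; simpl; intros H.
  apply app_eq_nil in H as [H1 H2]. apply app_eq_nil in H1 as [? ?].
  apply app_eq_nil in H2 as [? ?]. subst.
  rewrite H, H0, H1, H2. auto.
Qed.

Lemma apply_comm s p :
  fn p = [] -> (forall x, In x (bn p) -> dom s x) ->
  (forall x v, s x = Some v -> communicable v) ->
  communicable (apply_subst s p).
Proof.
  induction p; simpl; intros F D C.
  - specialize (D n (or_introl eq_refl)). unfold dom in D.
    destruct (s n) eqn:E; [eauto|congruence].
  - discriminate.
  - discriminate.
  - apply fn_comp_nil in F as [F1 F2].
    destruct (IHp1 F1) as [A1 B1]; [intros; apply D, in_or_app; auto|auto|].
    destruct (IHp2 F2) as [A2 B2]; [intros; apply D, in_or_app; auto|auto|].
    split; simpl; rewrite ?A1, ?A2, ?B1, ?B2; auto.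
Qed.

Lemma empty_match n s : subst_eq s empty_subst -> is_match (PVar n) s /\ is_match (PProt n) s.
Proof.
  intros E. unfold is_match, well_formed, dom, fn; simpl.
  repeat split; try apply NoDup_nil; try (intros; contradiction);
  try (intros H; exfalso; apply H; rewrite E; reflexivity);
  try (intros ? ? Hx; rewrite E in Hx; discriminate).
  all: match goal with H : _ = Some _ |- _ => rewrite E in H; discriminate end.
Qed.

Lemma compat_matches p s q r : compat p s q r -> is_match p s /\ is_match q r.
Proof.
  induction 1; auto.
  - split; auto. destruct H as [W [D C]].
    split; [|split].
    + split; [repeat constructor; simpl; tauto|]. simpl. unfold fn; simpl; tauto.
    + intros x. unfold dom. rewrite H1. unfold single_subst. simpl.
      destruct (Nat.eqb x y) eqn:E.
      * apply Nat.eqb_eq in E. split; [auto|congruence].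
      * apply Nat.eqb_neq in E. split; [congruence|intros [->|[]]; congruence].
    + intros x v Hx. rewrite H1 in Hx. unfold single_subst in Hx.
      destruct (Nat.eqb x y); inversion Hx; subst.
      apply apply_comm; auto. intros; apply D; auto.
  - split; apply empty_match; auto.
  - split; apply empty_match; auto.
  - split; [apply (empty_match n s)|apply (empty_match n r)]; auto.
Qed.

Lemma agree_comp a b s s1 s2 :
  is_match (PComp a b) s -> subst_eq s (union_subst s1 s2) ->
  is_match a s1 -> is_match b s2 ->
  (forall x, In x (bn a) -> s x = s1 x) /\ (forall x, In x (bn b) -> s x = s2 x).
Proof.
  intros [[ND _] _] E [_ [D1 _]] [_ [D2 _]]. simpl in ND. split; intros x Hx;
  rewrite E; unfold union_subst.
  - destruct (s1 x) eqn:Q; auto. exfalso. apply D1 in Hx. auto.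
  - destruct (s1 x) eqn:Q; auto. exfalso. assert (dom s1 x) by (unfold dom; congruence).
    apply D1 in H. eapply nodup_disj; eauto.
Qed.

Lemma bind_lemma p s q r : compat p s q r -> fn q = [] ->
  fn p = [] /\ apply_subst r q = apply_subst s p.
Proof.
  induction 1; intros F; try discriminate.
  - split; auto. simpl. rewrite H1. unfold single_subst. rewrite Nat.eqb_refl. auto.
  - apply fn_comp_nil in F as [F1 F2].
    destruct (IHcompat1 F1) as [G1 E1]. destruct (IHcompat2 F2) as [G2 E2].
    destruct (compat_matches _ _ _ _ H) as [M1 N1].
    destruct (compat_matches _ _ _ _ H0) as [M2 N2].
    destruct (agree_comp _ _ _ _ _ H3 H1 M1 M2) as [A1 A2].
    destruct (agree_comp _ _ _ _ _ H4 H2 N1 N2) as [B1 B2].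
    split.
    + unfold fn in *; simpl in *.
      apply app_eq_nil in G1 as [Ga Gb]. apply app_eq_nil in G2 as [Gc Gd].
      rewrite Ga, Gb, Gc, Gd. auto.
    + simpl. rewrite (apply_ext_on _ _ q1 B1), (apply_ext_on _ _ q2 B2),
        (apply_ext_on _ _ p1 A1), (apply_ext_on _ _ p2 A2), E1, E2. auto.
Qed.

Lemma compat_ext p s q r s' r' : compat p s q r -> subst_eq s s' -> subst_eq r r' ->
  compat p s' q r'.
Proof.
  intros H Es Er. destruct H.
  - apply compat_bind; auto. eapply is_match_ext; eauto.
    intros x. rewrite <- Er, H1. rewrite (apply_ext_on s s'); auto.
  - apply compat_var; intros x; [rewrite <- Es|rewrite <- Er]; auto.
  - apply compat_prot; intros x; [rewrite <- Es|rewrite <- Er]; auto.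
  - apply compat_prot_var; intros x; [rewrite <- Es|rewrite <- Er]; auto.
  - eapply compat_comp; eauto.
    + intros x; rewrite <- Es; auto.
    + intros x; rewrite <- Er; auto.
    + eapply is_match_ext; eauto.
    + eapply is_match_ext; eauto.
Qed.

Lemma same_on q r1 r2 : is_match q r1 -> is_match q r2 ->
  (forall x, In x (bn q) -> r1 x = r2 x) -> subst_eq r1 r2.
Proof.
  intros [_ [D1 _]] [_ [D2 _]] H x.
  destruct (r1 x) eqn:E.
  - assert (In x (bn q)) by (apply D1; unfold dom; congruence). rewrite <- H; auto.
  - destruct (r2 x) eqn:E2; auto. exfalso.
    assert (In x (bn q)) by (apply D2; unfold dom; congruence).
    apply D1 in H0. auto.
Qed.

Lemma trans p s q r : compat p s q r -> forall t th, compat q r t th -> compat p s t th.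
Proof.
  induction 1; intros t th HH.
  - inversion HH; subst. apply compat_bind; auto.
    intros x. rewrite H4. simpl. rewrite H1. unfold single_subst.
    rewrite Nat.eqb_refl. auto.
  - inversion HH; subst; try discriminate.
    apply compat_var; auto.
  - inversion HH; subst; try discriminate.
    + apply compat_prot; auto.
    + apply compat_prot_var; auto.
  - inversion HH; subst; try discriminate.
    apply compat_prot_var; auto.
  - inversion HH; subst.
    + destruct (bind_lemma _ _ _ _ (compat_comp _ _ _ _ _ _ _ _ _ _ H H0 H1 H2 H3 H4) H6)
        as [F E].
      apply compat_bind; auto. intros x. rewrite H7, E. auto.
    + destruct (compat_matches _ _ _ _ H) as [_ N1].
      destruct (compat_matches _ _ _ _ H0) as [_ N2].
      destruct (compat_matches _ _ _ _ H7) as [N1' _].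
      destruct (compat_matches _ _ _ _ H8) as [N2' _].
      destruct (agree_comp _ _ _ _ _ H4 H2 N1 N2) as [A1 A2].
      destruct (agree_comp _ _ _ _ _ H4 H9 N1' N2') as [B1 B2].
      assert (E1 : subst_eq s0 r1).
      { apply (same_on q1); auto. intros x Hx. rewrite <- A1, <- B1; auto. }
      assert (E2 : subst_eq s3 r2).
      { apply (same_on q2); auto. intros x Hx. rewrite <- A2, <- B2; auto. }
      eapply compat_comp; eauto.
      * apply IHcompat1. eapply compat_ext; eauto. intros x; auto.
      * apply IHcompat2. eapply compat_ext; eauto. intros x; auto.
Qed.

Theorem proposition3p19 :
  forall (p q r : pattern) (sigma rho theta : subst),
    is_match p sigma -> is_match q rho -> is_match r theta ->
    compat p sigma q rho -> compat q rho r theta ->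
    compat p sigma r theta.
Proof.
  intros. eapply trans; eauto.
Qed.
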